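(* Let $-\infty\le a<b\le\infty$, let $f,g$ be differentiable on $(a,b)$ with $g'\ne0$ on $(a,b)$, and suppose $\lim_{x\to a^+}f(x)=\lim_{x\to a^+}g(x)=0$. Let $H_{f,g}=\frac{f'}{g'}g-f$ and $H_{f,g}(b^-)=\lim_{x\to b^-}H_{f,g}(x)\in[-\infty,\infty]$. (A) Suppose there is $c\in(a,b)$ such that $f'/g'$ is strictly increasing on $(a,c)$ and strictly decreasing on $(c,b)$. Then: (i) if $\operatorname{sgn}(g')\cdot\operatorname{sgn}(H_{f,g}(b^-))\ge 0$, $f/g$ is strictly increasing on $(a,b)$; (ii) if $\operatorname{sgn}(g')\cdot\operatorname{sgn}(H_{f,g}(b^-))<0$, there is a unique $x_a\in(a,b)$ such that $f/g$ is strictly increasing on $(a,x_a)$ and strictly decreasing on $(x_a,b)$. (B) Suppose there is $c\in(a,b)$ such that $f'/g'$ is strictly decreasing on $(a,c)$ and strictly increasing on $(c,b)$. Then: (i) if $\operatorname{sgn}(g')\cdot\operatorname{sgn}(H_{f,g}(b^-))\le 0$, $f/g$ is strictly decreasing on $(a,b)$; (ii) if $\operatorname{sgn}(g')\cdot\operatorname{sgn}(H_{f,g}(b^-))>0$, there is a unique $x_a\in(a,b)$ such that $f/g$ is strictly decreasing on $(a,x_a)$ and strictly increasing on $(x_a,b)$.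
   Context: $H_{f,g}(x)=\frac{f'(x)}{g'(x)}g(x)-f(x)$ for $x\in(a,b)$. Here $\operatorname{sgn}(g')$ is the (constant) sign of $g'$ on $(a,b)$, and $\operatorname{sgn}(\pm\infty)=\pm1$. *)

(* Defs.v *)
From Stdlib Require Import Reals Lra.
Open Scope R_scope.

Inductive ER : Type := Fin (r : R) | PInf | NInf.

Definition ER_lt (x y : ER) : Prop :=
  match x, y with
  | Fin u, Fin v => u < v
  | NInf, Fin _ | NInf, PInf | Fin _, PInf => True
  | _, _ => False
  end.

Definition in_oo (u v : ER) (x : R) : Prop := ER_lt u (Fin x) /\ ER_lt (Fin x) v.

Definition sgnR (x : R) : R :=
  if Rlt_dec 0 x then 1 else if Rlt_dec x 0 then -1 else 0.

Definition sgnER (x : ER) : R :=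
  match x with Fin r => sgnR r | PInf => 1 | NInf => -1 end.

Definition strict_incr_on (u v : ER) (h : R -> R) : Prop :=
  forall x y, in_oo u v x -> in_oo u v y -> x < y -> h x < h y.

Definition strict_decr_on (u v : ER) (h : R -> R) : Prop :=
  forall x y, in_oo u v x -> in_oo u v y -> x < y -> h y < h x.

Definition lim_right (h : R -> R) (a : ER) (l : R) : Prop :=
  forall eps, 0 < eps ->
    exists u : R, ER_lt a (Fin u) /\
      forall x, ER_lt a (Fin x) -> x < u -> Rabs (h x - l) < eps.

Definition lim_left (h : R -> R) (b : ER) (L : ER) : Prop :=
  match L with
  | Fin l => forall eps, 0 < eps ->
      exists u : R, ER_lt (Fin u) b /\
        forall x, u < x -> ER_lt (Fin x) b -> Rabs (h x - l) < eps
  | PInf => forall M : R,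
      exists u : R, ER_lt (Fin u) b /\
        forall x, u < x -> ER_lt (Fin x) b -> M < h x
  | NInf => forall M : R,
      exists u : R, ER_lt (Fin u) b /\
        forall x, u < x -> ER_lt (Fin x) b -> h x < M
  end.

Definition Hfg (f g f' g' : R -> R) : R -> R :=
  fun x => f' x / g' x * g x - f x.

(* Main.v *)
Require Import Defs.
From Stdlib Require Import Reals Lra.
Open Scope R_scope.

Lemma sgnR_pos x : 0 < x -> sgnR x = 1.
Proof. intros; unfold sgnR; destruct (Rlt_dec 0 x); lra. Qed.
Lemma sgnR_neg x : x < 0 -> sgnR x = -1.
Proof. intros; unfold sgnR; destruct (Rlt_dec 0 x); try lra; destruct (Rlt_dec x 0); lra. Qed.

Definition negER (L : ER) : ER :=
  match L with Fin r => Fin (- r) | PInf => NInf | NInf => PInf end.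

Lemma sgnER_neg L : sgnER (negER L) = - sgnER L.
Proof. destruct L; simpl; try lra. unfold sgnR.
  destruct (Rlt_dec 0 (-r)), (Rlt_dec 0 r); try lra;
  destruct (Rlt_dec (-r) 0), (Rlt_dec r 0); lra. Qed.

Lemma lo_le a x y : ER_lt a (Fin x) -> x <= y -> ER_lt a (Fin y).
Proof. destruct a; simpl; auto; lra. Qed.
Lemma hi_le b x y : ER_lt (Fin y) b -> x <= y -> ER_lt (Fin x) b.
Proof. destruct b; simpl; auto; lra. Qed.
Lemma lo_min a x y : ER_lt a (Fin x) -> ER_lt a (Fin y) -> ER_lt a (Fin (Rmin x y)).
Proof. unfold Rmin; destruct (Rle_dec x y); auto. Qed.
Lemma hi_max b x y : ER_lt (Fin x) b -> ER_lt (Fin y) b -> ER_lt (Fin (Rmax x y)) b.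
Proof. unfold Rmax; destruct (Rle_dec x y); auto. Qed.
Lemma ex_lo a u : ER_lt a (Fin u) -> exists t, ER_lt a (Fin t) /\ t < u.
Proof. destruct a; simpl; intros; try tauto.
  exists ((r+u)/2); lra. exists (u-1); split; auto; lra. Qed.
Lemma ex_hi b u : ER_lt (Fin u) b -> exists t, u < t /\ ER_lt (Fin t) b.
Proof. destruct b; simpl; intros; try tauto.
  exists ((r+u)/2); lra. exists (u+1); split; auto; lra. Qed.
Lemma in_oo_between a b x y t : in_oo a b x -> in_oo a b y -> x <= t <= y -> in_oo a b t.
Proof. intros [H1 H2] [H3 H4] H; split; [apply (lo_le _ x)|apply (hi_le _ _ y)]; tauto || lra. Qed.
Lemma in_oo_fin a b c x : in_oo a b c -> ER_lt (Fin c) (Fin x) -> ER_lt (Fin x) b -> in_oo a b x.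
Proof. intros [H1 H2] H3 H4; simpl in H3; split; auto; apply (lo_le _ c); [exact H1|lra]. Qed.
Lemma in_oo_fin2 a b c x : in_oo a b c -> ER_lt a (Fin x) -> x < c -> in_oo a b x.
Proof. intros [H1 H2] H3 H4; split; auto; apply (hi_le _ _ c); auto; lra. Qed.

Lemma incr_neg u v q : strict_incr_on u v (fun x => - q x) <-> strict_decr_on u v q.
Proof. unfold strict_incr_on, strict_decr_on; split; intros H x y H1 H2 H3;
  specialize (H x y H1 H2 H3); lra. Qed.
Lemma decr_neg u v q : strict_decr_on u v (fun x => - q x) <-> strict_incr_on u v q.
Proof. unfold strict_incr_on, strict_decr_on; split; intros H x y H1 H2 H3;
  specialize (H x y H1 H2 H3); lra. Qed.
Lemma incr_ext u v q1 q2 : (forall x, q1 x = q2 x) -> strict_incr_on u v q1 -> strict_incr_on u v q2.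
Proof. unfold strict_incr_on; intros E H x y ? ? ?; rewrite <- !E; auto. Qed.
Lemma decr_ext u v q1 q2 : (forall x, q1 x = q2 x) -> strict_decr_on u v q1 -> strict_decr_on u v q2.
Proof. unfold strict_decr_on; intros E H x y ? ? ?; rewrite <- !E; auto. Qed.

Lemma lim_left_ext h1 h2 b L : (forall x, h1 x = h2 x) -> lim_left h1 b L -> lim_left h2 b L.
Proof. intros E; destruct L; simpl; intros H.
  - intros eps he; destruct (H eps he) as [u [Hu Hx]]; exists u; split; auto;
    intros; rewrite <- E; auto.
  - intros M; destruct (H M) as [u [Hu Hx]]; exists u; split; auto; intros; rewrite <- E; auto.
  - intros M; destruct (H M) as [u [Hu Hx]]; exists u; split; auto; intros; rewrite <- E; auto.
Qed.
Lemma lim_left_opp h b L : lim_left h b L -> lim_left (fun x => - h x) b (negER L).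
Proof. destruct L; simpl; intros H.
  - intros eps he; destruct (H eps he) as [u [Hu Hx]]; exists u; split; auto;
    intros; replace (- h x - - r) with (- (h x - r)) by ring; rewrite Rabs_Ropp; auto.
  - intros M; destruct (H (-M)) as [u [Hu Hx]]; exists u; split; auto; intros x H1 H2;
    specialize (Hx x H1 H2); lra.
  - intros M; destruct (H (-M)) as [u [Hu Hx]]; exists u; split; auto; intros x H1 H2;
    specialize (Hx x H1 H2); lra.
Qed.
Lemma lim_right_opp h a : lim_right h a 0 -> lim_right (fun x => - h x) a 0.
Proof. unfold lim_right; intros H eps he; destruct (H eps he) as [u [Hu Hx]];
  exists u; split; auto; intros; replace (- h x - 0) with (- (h x - 0)) by ring;
  rewrite Rabs_Ropp; auto. Qed.

Lemma deriv_pos_local f x l : derivable_pt_lim f x l -> 0 < l ->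
  exists d, 0 < d /\ forall h, 0 < h < d -> f x < f (x+h) /\ f (x-h) < f x.
Proof.
  intros H hl. destruct (H (l/2) ltac:(lra)) as [del Hd].
  exists del; split; [apply cond_pos|]. intros h Hh.
  assert (A := Hd h ltac:(lra) ltac:(rewrite Rabs_right; lra)).
  assert (B := Hd (-h) ltac:(lra) ltac:(rewrite Rabs_left; lra)).
  apply Rabs_def2 in A. apply Rabs_def2 in B.
  replace (x + - h) with (x - h) in B by ring.
  set (p := f (x+h) - f x) in *. set (m := f (x-h) - f x) in *.
  assert (E1 : p = p / h * h) by (field; lra).
  assert (E2 : m = m / (-h) * (-h)) by (field; lra).
  destruct A as [A1 A2]; destruct B as [B1 B2].
  set (r1 := p / h) in *. set (r2 := m / (-h)) in *.
  split.
  - assert (0 < r1 * h) by (apply Rmult_lt_0_compat; lra).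
    assert (0 < p) by lra. unfold p in *; lra.
  - assert (0 < r2 * h) by (apply Rmult_lt_0_compat; lra).
    assert (m < 0) by lra. unfold m in *; lra.
Qed.

Lemma no_sign_change f f' u v : u < v ->
  (forall x, u <= x <= v -> derivable_pt_lim f x (f' x)) ->
  (forall x, u <= x <= v -> f' x <> 0) -> 0 < f' u -> f' v < 0 -> False.
Proof.
  intros huv hd hn hu hv.
  destruct (continuity_ab_maj f u v ltac:(lra)) as [M [HM HMr]].
  { intros c Hc. apply derivable_continuous_pt. exists (f' c). apply hd; auto. }
  destruct (Rlt_or_le 0 (f' M)) as [Hp|Hp].
  - assert (M < v). { destruct (Req_dec M v); [subst; lra| lra]. }
    destruct (deriv_pos_local f M (f' M) (hd M HMr) Hp) as [d [hd0 Hd]].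
    set (h := Rmin (d/2) ((v-M)/2)).
    assert (0 < h < d /\ h <= (v-M)/2).
    { unfold h, Rmin; destruct (Rle_dec (d/2) ((v-M)/2)); lra. }
    destruct (Hd h ltac:(lra)). specialize (HM (M+h) ltac:(lra)). lra.
  - assert (f' M < 0) by (assert (f' M <> 0) by (apply hn; auto); lra).
    assert (u < M). { destruct (Req_dec M u); [subst; lra| lra]. }
    destruct (deriv_pos_local (fun x => - f x) M (- f' M)
       (derivable_pt_lim_opp _ _ _ (hd M HMr)) ltac:(lra)) as [d [hd0 Hd]].
    set (h := Rmin (d/2) ((M-u)/2)).
    assert (0 < h < d /\ h <= (M-u)/2).
    { unfold h, Rmin; destruct (Rle_dec (d/2) ((M-u)/2)); lra. }
    destruct (Hd h ltac:(lra)). specialize (HM (M-h) ltac:(lra)). lra.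
Qed.

Lemma sign_const a b g g' :
  (forall x, in_oo a b x -> derivable_pt_lim g x (g' x)) ->
  (forall x, in_oo a b x -> g' x <> 0) ->
  forall x y, in_oo a b x -> in_oo a b y -> 0 < g' x -> 0 < g' y.
Proof.
  intros hd hn x y hx hy hpx.
  destruct (Rlt_or_le 0 (g' y)) as [|Hy]; auto. exfalso.
  assert (g' y < 0) by (specialize (hn y hy); lra).
  destruct (Rtotal_order x y) as [Hxy|[Hxy|Hxy]].
  - apply (no_sign_change g g' x y Hxy); auto.
    + intros; apply hd; apply (in_oo_between a b x y); auto.
    + intros; apply hn; apply (in_oo_between a b x y); auto.
  - subst; lra.
  - apply (no_sign_change (fun t => - g t) (fun t => - g' t) y x Hxy); try lra.
    + intros; apply derivable_pt_lim_opp, hd; apply (in_oo_between a b y x); auto.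
    + intros t Ht. specialize (hn t ltac:(apply (in_oo_between a b y x); auto)). lra.
Qed.

Lemma cauchy_mvt f g f' g' x y : x < y ->
  (forall t, x <= t <= y -> derivable_pt_lim f t (f' t)) ->
  (forall t, x <= t <= y -> derivable_pt_lim g t (g' t)) ->
  exists t, x < t < y /\ f' t * (g y - g x) = g' t * (f y - f x).
Proof.
  intros hxy hf hg.
  set (K1 := g y - g x). set (K2 := f y - f x).
  destruct (MVT_cor2 (fun t => K1 * f t - K2 * g t) (fun t => K1 * f' t - K2 * g' t) x y hxy)
    as [c [Hc1 Hc2]].
  { intros c Hc. exact (derivable_pt_lim_minus _ _ c _ _
       (derivable_pt_lim_scal f K1 c _ (hf c Hc)) (derivable_pt_lim_scal g K2 c _ (hg c Hc))). }
  exists c; split; auto.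
  assert ((K1 * f' c - K2 * g' c) * (y - x) = 0) by (rewrite <- Hc1; unfold K1, K2; ring).
  apply Rmult_integral in H. destruct H; [lra|lra].
Qed.

Lemma incr_except (u v : ER) (q dq : R -> R) (e : R) :
  (forall x, in_oo u v x -> derivable_pt_lim q x (dq x)) ->
  (forall x, in_oo u v x -> x <> e -> 0 < dq x) ->
  strict_incr_on u v q.
Proof.
  intros hd hp.
  assert (L0 : forall x y, in_oo u v x -> in_oo u v y -> x < y -> ~ (x < e < y) -> q x < q y).
  { intros x y hx hy hxy hn.
    destruct (MVT_cor2 q dq x y hxy) as [c [Hc1 Hc2]].
    { intros; apply hd; apply (in_oo_between u v x y); auto. }
    assert (0 < dq c). { apply hp. apply (in_oo_between u v x y); auto; lra.
      intro; subst; apply hn; auto. }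
    nra. }
  intros x y hx hy hxy.
  destruct (Rlt_dec x e) as [h1|h1]; [destruct (Rlt_dec e y) as [h2|h2]|].
  - assert (in_oo u v e) by (apply (in_oo_between u v x y); auto; lra).
    apply Rlt_trans with (q e); apply L0; auto; lra.
  - apply L0; auto; lra.
  - apply L0; auto; lra.
Qed.

Definition peak a b q := exists xa, in_oo a b xa /\ strict_incr_on a (Fin xa) q /\
  strict_decr_on (Fin xa) b q /\ forall y, in_oo a b y -> strict_incr_on a (Fin y) q ->
  strict_decr_on (Fin y) b q -> y = xa.

Lemma peak_uniq a b q xa y : in_oo a b xa -> in_oo a b y ->
  strict_incr_on a (Fin xa) q -> strict_decr_on (Fin xa) b q ->
  strict_incr_on a (Fin y) q -> strict_decr_on (Fin y) b q -> y = xa.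
Proof.
  intros hx hy i1 d1 i2 d2.
  destruct (Rtotal_order y xa) as [h|[h|h]]; auto; exfalso.
  - set (p1 := y + (xa - y)/3). set (p2 := y + 2*(xa-y)/3).
    assert (A1 : in_oo a (Fin xa) p1) by (split; [apply (lo_le _ y); [apply hy|unfold p1; lra] | simpl; unfold p1; lra]).
    assert (A2 : in_oo a (Fin xa) p2) by (split; [apply (lo_le _ y); [apply hy|unfold p2; lra] | simpl; unfold p2; lra]).
    assert (B1 : in_oo (Fin y) b p1) by (split; [simpl; unfold p1; lra | apply (hi_le _ _ xa); [apply hx|unfold p1; lra]]).
    assert (B2 : in_oo (Fin y) b p2) by (split; [simpl; unfold p2; lra | apply (hi_le _ _ xa); [apply hx|unfold p2; lra]]).
    assert (p1 < p2) by (unfold p1, p2; lra).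
    specialize (i1 p1 p2 A1 A2 H). specialize (d2 p1 p2 B1 B2 H). lra.
  - set (p1 := xa + (y - xa)/3). set (p2 := xa + 2*(y-xa)/3).
    assert (A1 : in_oo a (Fin y) p1) by (split; [apply (lo_le _ xa); [apply hx|unfold p1; lra] | simpl; unfold p1; lra]).
    assert (A2 : in_oo a (Fin y) p2) by (split; [apply (lo_le _ xa); [apply hx|unfold p2; lra] | simpl; unfold p2; lra]).
    assert (B1 : in_oo (Fin xa) b p1) by (split; [simpl; unfold p1; lra | apply (hi_le _ _ y); [apply hy|unfold p1; lra]]).
    assert (B2 : in_oo (Fin xa) b p2) by (split; [simpl; unfold p2; lra | apply (hi_le _ _ y); [apply hy|unfold p2; lra]]).
    assert (p1 < p2) by (unfold p1, p2; lra).
    specialize (i2 p1 p2 A1 A2 H). specialize (d1 p1 p2 B1 B2 H). lra.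
Qed.

Lemma coreA a b f g f' g' (hab : ER_lt a b)
  (hf : forall x, in_oo a b x -> derivable_pt_lim f x (f' x))
  (hg : forall x, in_oo a b x -> derivable_pt_lim g x (g' x))
  (hp : forall x, in_oo a b x -> 0 < g' x)
  (hfa : lim_right f a 0) (hga : lim_right g a 0)
  (L : ER) (hL : lim_left (Hfg f g f' g') b L) c (hc : in_oo a b c)
  (hi : strict_incr_on a (Fin c) (fun x => f' x / g' x))
  (hd : strict_decr_on (Fin c) b (fun x => f' x / g' x)) :
  (0 <= sgnER L -> strict_incr_on a b (fun x => f x / g x)) /\
  (sgnER L < 0 -> peak a b (fun x => f x / g x)).
Proof.
  set (r := fun x => f' x / g' x) in *.
  set (H := Hfg f g f' g') in *.
  assert (HE : forall x, H x = r x * g x - f x) by reflexivity.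
  clearbody H.
  assert (ginc : forall x y, in_oo a b x -> in_oo a b y -> x < y -> g x < g y).
  { intros x y hx hy hxy. destruct (MVT_cor2 g g' x y hxy) as [t [E Ht]].
    { intros; apply hg; apply (in_oo_between a b x y); auto. }
    assert (0 < g' t) by (apply hp; apply (in_oo_between a b x y); auto; lra).
    assert (0 < g' t * (y - x)) by (apply Rmult_lt_0_compat; lra). lra. }
  assert (gpos : forall x, in_oo a b x -> 0 < g x).
  { intros x hx. destruct (ex_lo a x (proj1 hx)) as [z [hz1 hz2]].
    assert (hzin : in_oo a b z) by (apply (in_oo_fin2 a b x); auto).
    assert (g z < g x) by (apply ginc; auto).
    destruct (Rlt_or_le 0 (g x)); auto. exfalso.
    destruct (hga (- g z) ltac:(lra)) as [u [hu Hu]].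
    destruct (ex_lo a (Rmin u z) (lo_min a u z hu hz1)) as [t [ht1 ht2]].
    pose proof (Rmin_l u z); pose proof (Rmin_r u z).
    specialize (Hu t ht1 ltac:(lra)).
    assert (g t < g z) by (apply ginc; [apply (in_oo_fin2 a b z); auto; lra | auto | lra]).
    rewrite Rminus_0_r in Hu. apply Rabs_def2 in Hu. lra. }
  assert (cm : forall x y, in_oo a b x -> in_oo a b y -> x < y ->
     exists t, x < t < y /\ in_oo a b t /\ f y - f x = r t * (g y - g x)).
  { intros x y hx hy hxy. destruct (cauchy_mvt f g f' g' x y hxy) as [t [Ht E]].
    1,2: intros; (apply hf || apply hg); apply (in_oo_between a b x y); auto.
    assert (hti : in_oo a b t) by (apply (in_oo_between a b x y); auto; lra).
    exists t; split; auto; split; auto. unfold r. specialize (hp t hti).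
    apply (Rmult_eq_reg_l (g' t)); [| lra]. rewrite <- E. field. lra. }
  assert (Hpos1 : forall x, in_oo a b x -> x < c -> 0 < H x).
  { intros x hx hxc.
    destruct (ex_lo a x (proj1 hx)) as [z [hz1 hz2]].
    assert (hzin : in_oo a b z) by (apply (in_oo_fin2 a b x); auto).
    assert (hxc' : in_oo a (Fin c) x) by (split; [apply hx | simpl; lra]).
    assert (hzc' : in_oo a (Fin c) z) by (split; [apply hzin | simpl; lra]).
    assert (rzx : r z < r x) by (apply hi; auto).
    destruct (cm z x hzin hx hz2) as [t1 [Ht1 [t1in E1]]].
    assert (r t1 < r x) by (apply hi; [split; [apply t1in| simpl; lra] | auto | lra]).
    assert (gzx : g z < g x) by (apply ginc; auto).
    assert (gz0 : 0 < g z) by (apply gpos; auto).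
    assert (Key : f x <= r x * (g x - g z) + r z * g z).
    { apply Rnot_lt_le; intro Hc.
      set (K := r x * (g x - g z) + r z * g z) in *.
      set (d := f x - K).
      set (Rz := Rabs (r z)).
      assert (Rz0 : 0 <= Rz) by apply Rabs_pos.
      set (eps := d / (2*(1+Rz))).
      assert (Eeps : eps * (2*(1+Rz)) = d) by (unfold eps; field; lra).
      assert (eps0 : 0 < eps) by (unfold eps; apply Rdiv_lt_0_compat; unfold d; lra).
      destruct (hfa eps eps0) as [u1 [hu1 Hu1]].
      destruct (hga eps eps0) as [u2 [hu2 Hu2]].
      destruct (ex_lo a (Rmin (Rmin u1 u2) z) (lo_min _ _ _ (lo_min _ _ _ hu1 hu2) hz1))
        as [t [ht1 ht2]].
      pose proof (Rmin_l (Rmin u1 u2) z); pose proof (Rmin_r (Rmin u1 u2) z).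
      pose proof (Rmin_l u1 u2); pose proof (Rmin_r u1 u2).
      specialize (Hu1 t ht1 ltac:(lra)). specialize (Hu2 t ht1 ltac:(lra)).
      rewrite Rminus_0_r in Hu1, Hu2. apply Rabs_def2 in Hu1. apply Rabs_def2 in Hu2.
      assert (tin : in_oo a b t) by (apply (in_oo_fin2 a b z); auto; lra).
      destruct (cm t z tin hzin ltac:(lra)) as [t2 [Ht2 [t2in E2]]].
      assert (r t2 < r z) by (apply hi; [split; [apply t2in| simpl; lra] | auto | lra]).
      assert (gtz : g t < g z) by (apply ginc; auto; lra).
      assert (P1 : r t1 * (g x - g z) < r x * (g x - g z))
        by (apply Rmult_lt_compat_r; lra).
      assert (P2 : r t2 * (g z - g t) < r z * (g z - g t))
        by (apply Rmult_lt_compat_r; lra).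
      assert (P3 : - (r z * g t) <= Rz * eps).
      { pose proof (Rle_abs (r z)) as a1. pose proof (Rle_abs (- r z)) as a2.
        rewrite Rabs_Ropp in a2. fold Rz in a1, a2. destruct Hu2. nra. }
      assert (Rz * eps + eps = d / 2) by (rewrite <- Eeps; field).
      clearbody eps. unfold d, K in *. destruct Hu1, Hu2. lra. }
    rewrite HE. assert (0 < (r x - r z) * g z) by (apply Rmult_lt_0_compat; lra). nra. }
  assert (Hdec : forall x y, in_oo a b x -> in_oo a b y -> c < x -> x < y -> H y < H x).
  { intros x y hx hy hcx hxy.
    destruct (cm x y hx hy hxy) as [t [Ht [tin E]]].
    assert (r t < r x) by (apply hd; [split; [simpl; lra|apply hx]|split;[simpl;lra|apply tin]|lra]).
    assert (r y < r t) by (apply hd; [split; [simpl; lra|apply tin]|split;[simpl;lra|apply hy]|lra]).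
    assert (g x < g y) by (apply ginc; auto).
    assert (0 < g x) by (apply gpos; auto).
    assert (0 < (r t - r y)*(g y - g x)) by (apply Rmult_lt_0_compat; lra).
    assert (0 < (r x - r y) * g x) by (apply Rmult_lt_0_compat; lra).
    rewrite !HE. nra. }
  assert (qd : forall x, in_oo a b x ->
     derivable_pt_lim (fun x => f x / g x) x (g' x * H x / (g x)²)).
  { intros x hx. specialize (gpos x hx). specialize (hp x hx).
    replace (g' x * H x / (g x)²) with ((f' x * g x - g' x * f x) / (g x)²).
    - apply (derivable_pt_lim_div f g); auto. lra.
    - rewrite HE. unfold r, Rsqr. field. lra. }
  assert (qpos : forall x, in_oo a b x -> 0 < H x -> 0 < g' x * H x / (g x)²).
  { intros x hx h. apply Rdiv_lt_0_compat. apply Rmult_lt_0_compat; auto.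
    apply Rsqr_pos_lt. specialize (gpos x hx). lra. }
  assert (qneg : forall x, in_oo a b x -> H x < 0 -> 0 < - (g' x * H x / (g x)²)).
  { intros x hx h. assert (0 < g' x * (- H x) / (g x)²).
    { apply Rdiv_lt_0_compat. apply Rmult_lt_0_compat; auto; lra.
      apply Rsqr_pos_lt. specialize (gpos x hx). lra. }
    unfold Rdiv in *. lra. }
  split.
  - intros hs.
    assert (Hpos2 : forall x, in_oo a b x -> c < x -> 0 < H x).
    { intros x hx hcx. destruct (Rlt_or_le 0 (H x)) as [|hle]; auto. exfalso.
      destruct (ex_hi b x (proj2 hx)) as [x' [hx1 hx2]].
      assert (x'in : in_oo a b x') by (apply (in_oo_fin a b x); auto).
      assert (H x' < H x) by (apply Hdec; auto).
      destruct L as [l| |]; simpl in hL, hs.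
      - assert (l >= 0). { destruct (Rlt_or_le l 0); [rewrite sgnR_neg in hs; lra|lra]. }
        destruct (hL (- H x') ltac:(lra)) as [u [hu Hu]].
        destruct (ex_hi b (Rmax u x') (hi_max _ _ _ hu hx2)) as [z [hz1 hz2]].
        pose proof (Rmax_l u x'); pose proof (Rmax_r u x').
        specialize (Hu z ltac:(lra) hz2). apply Rabs_def2 in Hu.
        assert (H z < H x') by (apply Hdec; [auto | apply (in_oo_fin a b x'); simpl; auto; lra | lra | lra]).
        lra.
      - destruct (hL (H x)) as [u [hu Hu]].
        destruct (ex_hi b (Rmax u x) (hi_max _ _ _ hu (proj2 hx))) as [z [hz1 hz2]].
        pose proof (Rmax_l u x); pose proof (Rmax_r u x).
        specialize (Hu z ltac:(lra) hz2).
        assert (H z < H x) by (apply Hdec; [auto | apply (in_oo_fin a b x); simpl; auto; lra | lra | lra]).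
        lra.
      - lra. }
    apply (incr_except a b _ _ c qd).
    intros x hx hxc. apply qpos; auto.
    destruct (Rtotal_order x c) as [h|[h|h]]; [apply Hpos1|congruence|apply Hpos2]; auto.
  - intros hs.
    assert (Hneg : exists u, ER_lt (Fin u) b /\ forall z, u < z -> ER_lt (Fin z) b -> H z < 0).
    { destruct L as [l| |]; simpl in hL, hs.
      - assert (l < 0). { destruct (Rlt_or_le l 0); auto.
          destruct (Rlt_or_le 0 l). rewrite sgnR_pos in hs; lra.
          assert (l = 0) by lra. subst. unfold sgnR in hs.
          destruct (Rlt_dec 0 0); [lra|]. destruct (Rlt_dec 0 0); lra. }
        destruct (hL (- l) ltac:(lra)) as [u [hu Hu]]. exists u; split; auto.
        intros z h1 h2. specialize (Hu z h1 h2). apply Rabs_def2 in Hu. lra.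
      - lra.
      - destruct (hL 0) as [u [hu Hu]]. exists u; split; auto. }
    destruct Hneg as [u [hu Hu]].
    set (E := fun x => x = c \/ (c < x /\ in_oo a b x /\ 0 < H x)).
    assert (Eb : is_upper_bound E (Rmax u c)).
    { intros x [ex|[ex1 [ex2 ex3]]]. subst; apply Rmax_r.
      apply Rnot_lt_le; intro h. pose proof (Rmax_l u c).
      specialize (Hu x ltac:(lra) (proj2 ex2)). lra. }
    destruct (completeness E (ex_intro _ _ Eb) (ex_intro _ c (or_introl eq_refl))) as [m [Hm1 Hm2]].
    assert (cm0 : c <= m) by (apply Hm1; left; auto).
    assert (mle : m <= Rmax u c) by (apply Hm2; auto).
    assert (min : in_oo a b m).
    { split. apply (lo_le _ c); [apply hc|lra].
      apply (hi_le _ _ (Rmax u c)); auto. apply hi_max; auto. apply hc. }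
    assert (inc : strict_incr_on a (Fin m) (fun x => f x / g x)).
    { apply (incr_except a (Fin m) (fun x => f x / g x) (fun x => g' x * H x / (g x)²) c).
      { intros x hx. apply qd. apply (in_oo_fin2 a b m); [auto|apply hx|apply hx]. }
      intros x hx hxc. assert (xin : in_oo a b x) by (apply (in_oo_fin2 a b m); [auto|apply hx|apply hx]).
      apply qpos; auto.
      destruct (Rtotal_order x c) as [h|[h|h]]; [apply Hpos1; auto|congruence|].
      destruct (Rlt_or_le 0 (H x)) as [|hle]; auto. exfalso.
      assert (is_upper_bound E x).
      { intros e [ee|[ee1 [ee2 ee3]]]. subst; lra.
        apply Rnot_lt_le; intro. assert (H e < H x) by (apply Hdec; auto). lra. }
      specialize (Hm2 x H0). destruct hx as [_ hx]; simpl in hx. lra. }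
    assert (dec : strict_decr_on (Fin m) b (fun x => f x / g x)).
    { apply incr_neg.
      assert (xin : forall x, in_oo (Fin m) b x -> in_oo a b x)
        by (intros x hx; apply (in_oo_fin a b m); auto; apply hx).
      apply (incr_except (Fin m) b _ (fun x => - (g' x * H x / (g x)²)) m).
      - intros x hx. apply (derivable_pt_lim_opp (fun x => f x / g x)). apply qd; auto.
      - intros x hx _. apply qneg; auto.
        destruct (Rlt_or_le (H x) 0) as [|hle]; auto. exfalso.
        destruct hx as [hx1 hx2]; simpl in hx1.
        set (y := (m + x)/2).
        assert (yin : in_oo a b y) by (apply (in_oo_fin a b m); auto; simpl; unfold y; try lra;
            apply (hi_le _ _ x); auto; unfold y; lra).
        assert (H x < H y) by (apply Hdec; auto; [apply (in_oo_fin a b m); auto|unfold y; lra|unfold y; lra]).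
        assert (E y) by (right; split; [unfold y; lra|split; auto; lra]).
        specialize (Hm1 y H1). unfold y in Hm1. lra. }
    exists m; split; auto; split; auto; split; auto.
    intros y hy hy1 hy2. apply (peak_uniq a b (fun x => f x / g x) m y); auto.
Qed.

Lemma ex_in a b : ER_lt a b -> exists p, in_oo a b p.
Proof. destruct a, b; simpl; intros; try tauto.
  exists ((r+r0)/2); split; simpl; lra.
  exists (r+1); split; simpl; auto; lra.
  exists (r-1); split; simpl; auto; lra.
  exists 0; split; simpl; auto. Qed.

Lemma peak_ext a b q1 q2 : (forall x, q1 x = q2 x) -> peak a b q1 -> peak a b q2.
Proof.
  intros E [m [h1 [h2 [h3 h4]]]]. exists m; split; auto; split; [|split].
  - apply (incr_ext _ _ q1); auto.
  - apply (decr_ext _ _ q1); auto.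
  - intros y hy i d. apply h4; auto.
    apply (incr_ext _ _ q2); auto. apply (decr_ext _ _ q2); auto.
Qed.

Lemma valley_of_peak a b q : peak a b (fun x => - q x) ->
  exists xa, in_oo a b xa /\ strict_decr_on a (Fin xa) q /\ strict_incr_on (Fin xa) b q /\
   forall y, in_oo a b y -> strict_decr_on a (Fin y) q -> strict_incr_on (Fin y) b q -> y = xa.
Proof.
  intros [m [h1 [h2 [h3 h4]]]]. exists m; split; auto; split; [|split].
  - apply incr_neg; auto.
  - apply decr_neg; auto.
  - intros y hy i d. apply h4; auto.
    apply incr_neg; auto. apply decr_neg; auto.
Qed.

Theorem mainTheorem3
  (a b : ER) (hab : ER_lt a b)
  (f g f' g' : R -> R)
  (hf : forall x, in_oo a b x -> derivable_pt_lim f x (f' x))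
  (hg : forall x, in_oo a b x -> derivable_pt_lim g x (g' x))
  (hg'0 : forall x, in_oo a b x -> g' x <> 0)
  (hfa : lim_right f a 0) (hga : lim_right g a 0)
  (L : ER) (hL : lim_left (Hfg f g f' g') b L) :
  ((exists c, in_oo a b c /\
      strict_incr_on a (Fin c) (fun x => f' x / g' x) /\
      strict_decr_on (Fin c) b (fun x => f' x / g' x)) ->
    ((forall x, in_oo a b x -> sgnR (g' x) * sgnER L >= 0) ->
       strict_incr_on a b (fun x => f x / g x)) /\
    ((forall x, in_oo a b x -> sgnR (g' x) * sgnER L < 0) ->
       exists xa, in_oo a b xa /\
         strict_incr_on a (Fin xa) (fun x => f x / g x) /\
         strict_decr_on (Fin xa) b (fun x => f x / g x) /\
         forall y, in_oo a b y ->
           strict_incr_on a (Fin y) (fun x => f x / g x) ->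
           strict_decr_on (Fin y) b (fun x => f x / g x) -> y = xa))
  /\
  ((exists c, in_oo a b c /\
      strict_decr_on a (Fin c) (fun x => f' x / g' x) /\
      strict_incr_on (Fin c) b (fun x => f' x / g' x)) ->
    ((forall x, in_oo a b x -> sgnR (g' x) * sgnER L <= 0) ->
       strict_decr_on a b (fun x => f x / g x)) /\
    ((forall x, in_oo a b x -> sgnR (g' x) * sgnER L > 0) ->
       exists xa, in_oo a b xa /\
         strict_decr_on a (Fin xa) (fun x => f x / g x) /\
         strict_incr_on (Fin xa) b (fun x => f x / g x) /\
         forall y, in_oo a b y ->
           strict_decr_on a (Fin y) (fun x => f x / g x) ->
           strict_incr_on (Fin y) b (fun x => f x / g x) -> y = xa)).
Proof.
  destruct (ex_in a b hab) as [p hp0].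
  assert (hmf : forall x, in_oo a b x -> derivable_pt_lim (fun x => - f x) x (- f' x))
    by (intros x hx; apply (derivable_pt_lim_opp f), hf; auto).
  assert (hmg : forall x, in_oo a b x -> derivable_pt_lim (fun x => - g x) x (- g' x))
    by (intros x hx; apply (derivable_pt_lim_opp g), hg; auto).
  pose proof (lim_right_opp f a hfa) as hmfa.
  pose proof (lim_right_opp g a hga) as hmga.
  destruct (Rlt_or_le 0 (g' p)) as [gp|gp].
  - assert (hpos : forall x, in_oo a b x -> 0 < g' x)
      by (intros; apply (sign_const a b g g' hg hg'0 p); auto).
    assert (sp : sgnR (g' p) = 1) by (apply sgnR_pos; auto).
    split.
    + intros [c [hc [hi hd]]].
      destruct (coreA a b f g f' g' hab hf hg hpos hfa hga L hL c hc hi hd) as [A1 A2].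
      split.
      * intros Hs. apply A1. specialize (Hs p hp0). rewrite sp in Hs. lra.
      * intros Hs. specialize (Hs p hp0). rewrite sp in Hs. exact (A2 ltac:(lra)).
    + intros [c [hc [hd hi]]].
      assert (hL' : lim_left (Hfg (fun x => - f x) g (fun x => - f' x) g') b (negER L)).
      { apply (lim_left_ext (fun x => - Hfg f g f' g' x)).
        intros; unfold Hfg, Rdiv; ring. apply lim_left_opp; auto. }
      assert (hi' : strict_incr_on a (Fin c) (fun x => - f' x / g' x)).
      { apply (incr_ext _ _ (fun x => - (f' x / g' x))). intros; unfold Rdiv; ring.
        apply incr_neg; auto. }
      assert (hd' : strict_decr_on (Fin c) b (fun x => - f' x / g' x)).
      { apply (decr_ext _ _ (fun x => - (f' x / g' x))). intros; unfold Rdiv; ring.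
        apply decr_neg; auto. }
      destruct (coreA a b _ g _ g' hab hmf hg hpos hmfa hga _ hL' c hc hi' hd') as [A1 A2].
      rewrite sgnER_neg in A1, A2.
      split.
      * intros Hs. specialize (Hs p hp0). rewrite sp in Hs.
        apply incr_neg. apply (incr_ext _ _ (fun x => - f x / g x)).
        intros; unfold Rdiv; ring. apply A1; lra.
      * intros Hs. specialize (Hs p hp0). rewrite sp in Hs.
        apply valley_of_peak. apply (peak_ext _ _ (fun x => - f x / g x)).
        intros; unfold Rdiv; ring. apply A2; lra.
  - assert (gn : g' p < 0) by (specialize (hg'0 p hp0); lra).
    assert (hneg : forall x, in_oo a b x -> 0 < - g' x).
    { intros x hx. apply (sign_const a b (fun x => - g x) (fun x => - g' x) hmg) with p; auto.
      intros y hy; specialize (hg'0 y hy); lra. lra. }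
    assert (sp : sgnR (g' p) = -1) by (apply sgnR_neg; auto).
    split.
    + intros [c [hc [hi hd]]].
      assert (hL' : lim_left (Hfg (fun x => - f x) (fun x => - g x) (fun x => - f' x) (fun x => - g' x)) b (negER L)).
      { apply (lim_left_ext (fun x => - Hfg f g f' g' x)).
        intros; unfold Hfg, Rdiv; rewrite Rinv_opp; ring. apply lim_left_opp; auto. }
      assert (E : forall x, f' x / g' x = - f' x / - g' x)
        by (intros; unfold Rdiv; rewrite Rinv_opp; ring).
      assert (hi' : strict_incr_on a (Fin c) (fun x => - f' x / - g' x))
        by (apply (incr_ext _ _ (fun x => f' x / g' x)); auto).
      assert (hd' : strict_decr_on (Fin c) b (fun x => - f' x / - g' x))
        by (apply (decr_ext _ _ (fun x => f' x / g' x)); auto).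
      destruct (coreA a b _ _ _ _ hab hmf hmg hneg hmfa hmga _ hL' c hc hi' hd') as [A1 A2].
      rewrite sgnER_neg in A1, A2.
      assert (Eq : forall x, - f x / - g x = f x / g x)
        by (intros; unfold Rdiv; rewrite Rinv_opp; ring).
      split.
      * intros Hs. specialize (Hs p hp0). rewrite sp in Hs.
        apply (incr_ext _ _ (fun x => - f x / - g x)); auto. apply A1; lra.
      * intros Hs. specialize (Hs p hp0). rewrite sp in Hs.
        apply (peak_ext _ _ (fun x => - f x / - g x)); auto. apply A2; lra.
    + intros [c [hc [hd hi]]].
      assert (hL' : lim_left (Hfg f (fun x => - g x) f' (fun x => - g' x)) b L).
      { apply (lim_left_ext (Hfg f g f' g')); auto.
        intros; unfold Hfg, Rdiv; rewrite Rinv_opp; ring. }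
      assert (E : forall x, - (f' x / g' x) = f' x / - g' x)
        by (intros; unfold Rdiv; rewrite Rinv_opp; ring).
      assert (hi' : strict_incr_on a (Fin c) (fun x => f' x / - g' x)).
      { apply (incr_ext _ _ (fun x => - (f' x / g' x))); auto. apply incr_neg; auto. }
      assert (hd' : strict_decr_on (Fin c) b (fun x => f' x / - g' x)).
      { apply (decr_ext _ _ (fun x => - (f' x / g' x))); auto. apply decr_neg; auto. }
      destruct (coreA a b _ _ _ _ hab hf hmg hneg hfa hmga _ hL' c hc hi' hd') as [A1 A2].
      assert (Eq : forall x, f x / - g x = - (f x / g x))
        by (intros; unfold Rdiv; rewrite Rinv_opp; ring).
      split.
      * intros Hs. specialize (Hs p hp0). rewrite sp in Hs.
        apply incr_neg. apply (incr_ext _ _ (fun x => f x / - g x)); auto. apply A1; lra.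
      * intros Hs. specialize (Hs p hp0). rewrite sp in Hs.
        apply valley_of_peak. apply (peak_ext _ _ (fun x => f x / - g x)); auto. apply A2; lra.
Qed.
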